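(* Let $G=(V,E)$ be a $\lambda$-expander graph, $l\ge1$ an integer, and $f:V\to\mathbb R_{\ge0}$ such that $\Pr_{v\sim U(V)}(f(v)\ge x)\le\exp(-x(\ln x)^3)$ for all real $x\ge 20$, and suppose $\lambda\le\exp(-l(\ln l)^3)$. Then \[ \Pr_{w\sim\mathrm{Walk}(G,l)}\Big(\textstyle\sum_{i\in[l]}f(w_i)\ge C\,l\Big)\le\exp(-l), \] where $C:=e^2+e^3+(e-1)$ (note $C\le 30$).
   Context: $[l]:=\{0,\dots,l-1\}$; $U(V)$ is the uniform distribution on $V$. Graphs are finite, undirected, may have parallel edges and self-loops; the adjacency matrix $A=(a_{uv})$ counts edges between $u$ and $v$; the graph is $d$-regular ($d\ge1$) if $A$ is symmetric with all row sums $d$; it is a $\lambda$-expander if it is $d$-regular and the second largest absolute value of the eigenvalues of $A$ (with multiplicity) is at most $d\lambda$. $\mathrm{Walk}(G,l)$ is the distribution of $w=(w_0,\dots,w_{l-1})$ where $w_0$ is uniform on $V$ and $w_{i+1}=u$ with probability $a_{w_iu}/d$ given the past. *)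

(* Defs.v *)
From HB Require Import structures.
From mathcomp Require Import all_boot all_order all_algebra.
From mathcomp Require Import all_classical all_reals all_analysis.
Set Implicit Arguments. Unset Strict Implicit. Unset Printing Implicit Defensive.
Import Order.TTheory GRing.Theory Num.Theory.
Local Open Scope ring_scope.

(* Graph on vertex set V = 'I_n given by its adjacency matrix A (entries in nat,
   counting parallel edges / self-loops). *)

Definition regular (n : nat) (A : 'M[nat]_n) (d : nat) : Prop :=
  (0 < d)%N /\ A^T = A /\ forall i : 'I_n, (\sum_(j < n) A i j)%N = d.

Definition adjR (R : realType) (n : nat) (A : 'M[nat]_n) : 'M[R]_n :=
  map_mx (fun k : nat => k%:R) A.

(* lambda-expander: d-regular and the second largest absolute value of the
   eigenvalues (with multiplicity, i.e. the roots of the characteristic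
   polynomial, which splits over R since A is symmetric) is at most d*lambda. *)
Definition expander (R : realType) (n : nat) (A : 'M[nat]_n) (d : nat)
  (lam : R) : Prop :=
  regular A d /\
  exists s : seq R,
    char_poly (adjR R A) = \prod_(mu <- s) ('X - mu%:P) /\
    ((1 < size s)%N ->
       nth 0 (sort (fun x y : R => y <= x) [seq `|mu| | mu <- s]) 1
         <= d%:R * lam).

Definition prU (R : realType) (n : nat) (P : pred 'I_n) : R :=
  #|[set v | P v]|%:R / n%:R.

(* Probability of the walk w = (w_0,...,w_{l-1}) under Walk(G,l):
   (1/|V|) * prod_{i+1<l} a_{w_i w_{i+1}} / d *)
Definition walk_prob (R : realType) (n : nat) (A : 'M[nat]_n) (d l : nat)
  (w : {ffun 'I_l -> 'I_n}) : R :=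
  n%:R^-1 * \prod_(i < l) \prod_(j < l | val j == (val i).+1)
                             ((A (w i) (w j))%:R / d%:R).

Definition prWalk (R : realType) (n : nat) (A : 'M[nat]_n) (d l : nat)
  (P : pred {ffun 'I_l -> 'I_n}) : R :=
  \sum_(w : {ffun 'I_l -> 'I_n} | P w) walk_prob R A d w.

Definition constC (R : realType) : R :=
  expR 2 + expR 3 + (expR 1 - 1).
Arguments prU R {n} P.
Arguments prWalk R {n} A d l P.
Arguments expander {R n} A d lam.

(* Main.v *)
Require Import Defs.
From HB Require Import structures.
From mathcomp Require Import all_boot all_order all_algebra.
From mathcomp Require Import all_classical all_reals all_analysis.
From mathcomp Require Import complex.
From mathcomp Require Import ring lra.
Import Order.TTheory GRing.Theory Num.Theory.
Local Open Scope ring_scope.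

Import Order.TTheory GRing.Theory Num.Theory.
Local Open Scope ring_scope.
Set Implicit Arguments. Unset Strict Implicit.

Definition qq (R : realType) n (A : 'M[nat]_n) (d : nat) (a b : 'I_n) : R :=
  (A a b)%:R / d%:R.

Definition Wt (R : realType) n (A : 'M[nat]_n) (d l : nat)
  (w : {ffun 'I_l -> 'I_n}) : R :=
  \prod_(i < l) \prod_(j < l | val j == (val i).+1) qq R A d (w i) (w j).

Definition fcons (T : Type) l (a : T) (w : {ffun 'I_l -> T}) : {ffun 'I_l.+1 -> T} :=
  [ffun i => if unlift ord0 i is Some j then w j else a].

Lemma fcons0 (T : Type) l (a : T) (w : {ffun 'I_l -> T}) : fcons a w ord0 = a.
Proof. by rewrite /fcons ffunE unlift_none. Qed.

Lemma fconsS (T : Type) l (a : T) (w : {ffun 'I_l -> T}) j : fcons a w (lift ord0 j) = w j.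
Proof. by rewrite /fcons ffunE liftK. Qed.

Lemma sum_ffunS (R : realType) (T : finType) l (F : {ffun 'I_l.+1 -> T} -> R) :
  \sum_(w : {ffun 'I_l.+1 -> T}) F w =
  \sum_(a : T) \sum_(w : {ffun 'I_l -> T}) F (fcons a w).
Proof.
rewrite pair_big /=.
rewrite (reindex (fun p : T * {ffun 'I_l -> T} => fcons p.1 p.2)) //=.
exists (fun w : {ffun 'I_l.+1 -> T} => (w ord0, [ffun j => w (lift ord0 j)])).
  move=> [a w] _ /=; rewrite fcons0; congr pair; apply/ffunP => j.
  by rewrite ffunE fconsS.
move=> w _; apply/ffunP => i; rewrite /fcons ffunE.
by case: unliftP => [j ->|->] //; rewrite ffunE.
Qed.

Lemma prod_eqk (R : realType) m k (F : 'I_m -> R) (Hk : (k < m)%N) :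
  \prod_(j < m | val j == k) F j = F (Ordinal Hk).
Proof.
rewrite (eq_bigl (pred1 (Ordinal Hk))) ?big_pred1_eq //.
Qed.

Lemma prod_eqk0 (R : realType) m k (F : 'I_m -> R) :
  (m <= k)%N -> \prod_(j < m | val j == k) F j = 1.
Proof.
move=> Hk; apply: big1 => j /eqP Hj; exfalso.
by have := ltn_ord j; rewrite Hj ltnNge Hk.
Qed.

Lemma Wt1 (R : realType) n (A : 'M[nat]_n) d (w : {ffun 'I_1 -> 'I_n}) :
  Wt R A d w = 1.
Proof. by rewrite /Wt big_ord1 prod_eqk0. Qed.

Lemma WtS (R : realType) n (A : 'M[nat]_n) d l a (w : {ffun 'I_l.+1 -> 'I_n}) :
  Wt R A d (fcons a w) = qq R A d a (w ord0) * Wt R A d w.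
Proof.
rewrite /Wt big_ord_recl /=.
have H1 : (1 < l.+2)%N by [].
rewrite (prod_eqk _ H1) fcons0.
have -> : Ordinal H1 = lift ord0 ord0 by apply/val_inj.
rewrite fconsS; congr (_ * _); apply: eq_bigr => i _.
rewrite big_mkcond big_ord_recl /= fconsS mul1r [in RHS]big_mkcond.
apply: eq_bigr => j _ /=; by rewrite !fconsS.
Qed.

Fixpoint vn (R : realType) n (A : 'M[nat]_n) (d : nat) (l : nat)
  (h : nat -> 'I_n -> R) (a : 'I_n) : R :=
  h 0%N a * (match l with 0 => 1 | l'.+1 =>
     \sum_b qq R A d a b * vn A d l' (fun i => h i.+1) b end).

Lemma vn_scale (R : realType) n (A : 'M[nat]_n) d l (h : nat -> 'I_n -> R) c b :
  vn A d l (fun i => if i is 0 then (fun x => c x * h 0%N x) else h i) b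
  = c b * vn A d l h b.
Proof. by case: l => [|l] /=; rewrite mulrA. Qed.

Lemma walk_sum (R : realType) n (A : 'M[nat]_n) d l (h : nat -> 'I_n -> R) :
  \sum_(w : {ffun 'I_l.+1 -> 'I_n}) Wt R A d w * \prod_(i < l.+1) h i (w i)
  = \sum_a vn A d l h a.
Proof.
elim: l h => [|l IH] h.
  rewrite sum_ffunS; apply: eq_bigr => a _ /=.
  rewrite (eq_bigr (fun _ => h 0%N a)) => [|w _]; last first.
    by rewrite Wt1 mul1r big_ord1 fcons0.
  rewrite sumr_const.
  have -> : #|{: {ffun 'I_0 -> 'I_n}}| = 1%N.
    by rewrite card_ffun !card_ord.
  by rewrite mulr1.
rewrite sum_ffunS; apply: eq_bigr => a _ /=.
set h' := fun i => h i.+1.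
set h'' := fun i => if i is 0 then (fun x => qq R A d a x * h' 0%N x) else h' i.
have E : forall w : {ffun 'I_l.+1 -> 'I_n},
   Wt R A d (fcons a w) * \prod_(i < l.+2) h i (fcons a w i)
   = h 0%N a * (Wt R A d w * \prod_(i < l.+1) h'' i (w i)).
  move=> w; rewrite WtS big_ord_recl fcons0.
  under eq_bigr do rewrite fconsS.
  have -> : \prod_(i < l.+1) h'' i (w i) = qq R A d a (w ord0) * \prod_(i < l.+1) h' i (w i).
    by rewrite !big_ord_recl /= mulrA.
  rewrite /h'; ring.
under eq_bigr do rewrite E.
rewrite -mulr_sumr IH; congr (_ * _); apply: eq_bigr => b _.
by rewrite /h'' vn_scale.
Qed.

Lemma eq_ler (R : realType) (x y : R) : x = y -> x <= y.
Proof. by move=> ->. Qed.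

Lemma rowsum_q (R : realType) n (A : 'M[nat]_n) d (a : 'I_n) :
  regular A d -> \sum_b qq R A d a b = 1.
Proof.
move=> [d0 [_ Hr]]; rewrite /qq -mulr_suml -natr_sum Hr divff //.
by rewrite pnatr_eq0 -lt0n.
Qed.

Lemma colsum_q (R : realType) n (A : 'M[nat]_n) d (b : 'I_n) :
  regular A d -> \sum_a qq R A d a b = 1.
Proof.
move=> Hreg; rewrite -(rowsum_q R b Hreg); apply: eq_bigr => a _.
case: Hreg => _ [Hs _]; rewrite /qq.
by have := congr1 (fun M : 'M[nat]_n => M a b) Hs; rewrite /= mxE => ->.
Qed.

Lemma vn_ones (R : realType) n (A : 'M[nat]_n) d l (h : nat -> 'I_n -> R) a :
  regular A d -> (forall j x, h j x = 1) -> vn A d l h a = 1.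
Proof.
move=> Hreg; elim: l h a => [|l IH] h a Hh /=; first by rewrite Hh mulr1.
rewrite Hh mul1r (eq_bigr (fun b => qq R A d a b)) ?rowsum_q // => b _.
by rewrite IH ?mulr1.
Qed.

Lemma vn_marg (R : realType) n (A : 'M[nat]_n) d (h : nat -> 'I_n -> R) i l :
  regular A d -> (i <= l)%N -> (forall j x, j != i -> h j x = 1) ->
  \sum_a vn A d l h a = \sum_a h i a.
Proof.
move=> Hreg; elim: i l h => [|i IH] l h Hil Hh.
  apply: eq_bigr => a _; case: l Hil => [|l] _ /=; first by rewrite mulr1.
  rewrite (eq_bigr (fun b => qq R A d a b)); first by rewrite rowsum_q // mulr1.
  move=> b _; rewrite vn_ones ?mulr1 // => j x; exact: Hh.
case: l Hil => [//|l] Hil /=.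
under eq_bigr do rewrite Hh // mul1r.
rewrite exchange_big /=.
rewrite (eq_bigr (fun b => vn A d l (fun j => h j.+1) b)) => [|b _].
  by apply: (IH l (fun j => h j.+1)) => // j x Hj; apply: Hh.
by rewrite -mulr_suml colsum_q // mul1r.
Qed.

Definition sq (R : realType) n (y : 'I_n -> R) := \sum_a y a ^+ 2.
Definition dot (R : realType) n (y z : 'I_n -> R) := \sum_a y a * z a.

Lemma sq_ge0 (R : realType) n (y : 'I_n -> R) : 0 <= sq y.
Proof. by apply: sumr_ge0 => a _; rewrite sqr_ge0. Qed.

Lemma sq_eq0 (R : realType) n (y : 'I_n -> R) : sq y = 0 -> forall a, y a = 0.
Proof.
move=> H a; have /psumr_eq0P H2 := H.
have := H2 (fun b _ => sqr_ge0 (y b)) a isT.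
by move=> /eqP; rewrite sqrf_eq0 => /eqP.
Qed.

Lemma CS (R : realType) n (y z : 'I_n -> R) : dot y z ^+ 2 <= sq y * sq z.
Proof.
have [Hz|Hz] := eqVneq (sq z) 0.
  rewrite Hz mulr0 /dot big1 ?expr0n // => a _; by rewrite (sq_eq0 Hz) mulr0.
have Hzp : 0 < sq z by rewrite lt_neqAle eq_sym Hz sq_ge0.
set S := sq z; set D := dot y z.
have E : \sum_a (y a * S - z a * D) ^+ 2 = S * (S * sq y - D ^+ 2).
  have -> : \sum_a (y a * S - z a * D) ^+ 2 =
     \sum_a (S ^+ 2 * y a ^+ 2 - (2 * S * D) * (y a * z a) + D ^+ 2 * z a ^+ 2).
    by apply: eq_bigr => a _; ring.
  rewrite big_split /= sumrB -!mulr_sumr -/(sq y) -/(dot y z) -/(sq z) -/S -/D.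
  ring.
have : 0 <= S * (S * sq y - D ^+ 2).
  by rewrite -E; apply: sumr_ge0 => a _; rewrite sqr_ge0.
rewrite pmulr_rge0 // subr_ge0 => H; rewrite mulrC; exact H.
Qed.

Lemma le_of_sqr (R : realType) (x c : R) : 0 <= c -> x ^+ 2 <= c ^+ 2 -> x <= c.
Proof. move=> Hc H; nra. Qed.

Lemma sq_add (R : realType) n (u v : 'I_n -> R) al be Y :
  0 <= al -> 0 <= be -> 0 <= Y ->
  sq u <= al ^+ 2 * Y -> sq v <= be ^+ 2 * Y ->
  sq (fun a => u a + v a) <= (al + be) ^+ 2 * Y.
Proof.
move=> Ha Hb HY Hu Hv.
have Hd : dot u v <= al * be * Y.
  apply: le_of_sqr; first by rewrite !mulr_ge0.
  apply: (le_trans (CS u v)).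
  have Hu0 := sq_ge0 u; have Hv0 := sq_ge0 v.
  have -> : (al * be * Y) ^+ 2 = (al ^+ 2 * Y) * (be ^+ 2 * Y) by ring.
  by apply: ler_pM.
have -> : sq (fun a => u a + v a) = sq u + 2 * dot u v + sq v.
  rewrite /sq /dot (eq_bigr (fun a => u a ^+ 2 + 2 * (u a * v a) + v a ^+ 2)).
    by rewrite !big_split /= -mulr_sumr.
  by move=> a _; ring.
nra.
Qed.

Definition Pf (R : realType) n (A : 'M[nat]_n) d (z : 'I_n -> R) (a : 'I_n) : R :=
  \sum_b qq R A d a b * z b.

Definition Mop (R : realType) n (A : 'M[nat]_n) d (s y : 'I_n -> R) (a : 'I_n) : R :=
  s a * Pf A d (fun b => s b * y b) a.

Lemma Mbound (R : realType) n (A : 'M[nat]_n) d (s : 'I_n -> R) (K lam : R) y :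
  regular A d -> (0 < n)%N -> 0 <= K -> 0 <= lam -> (forall a, s a ^+ 2 <= K) ->
  (forall z : 'I_n -> R, \sum_a z a = 0 -> sq (Pf A d z) <= lam ^+ 2 * sq z) ->
  sq (Mop A d s y) <= (sq s / n%:R + lam * K) ^+ 2 * sq y.
Proof.
move=> Hreg Hn HK Hl Hs Hspec.
have Hn0 : n%:R != 0 :> R by rewrite pnatr_eq0 -lt0n.
set z := fun b => s b * y b.
set m := (\sum_b z b) / n%:R.
set zp := fun b => z b - m.
have Hsz : \sum_b z b = n%:R * m by rewrite /m mulrC divfK.
have Hzp : \sum_b zp b = 0.
  by rewrite /zp sumrB sumr_const card_ord Hsz mulr_natl subrr.
have HPf : forall a, Pf A d z a = m + Pf A d zp a.
  move=> a; rewrite /Pf /zp.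
  under [in RHS]eq_bigr do rewrite mulrBr.
  by rewrite sumrB -mulr_suml rowsum_q // mul1r addrC subrK.
have -> : sq (Mop A d s y) = sq (fun a => s a * m + s a * Pf A d zp a).
  by rewrite /sq; apply: eq_bigr => a _; rewrite /Mop -/z HPf mulrDr.
have Hss := sq_ge0 s; have Hsy := sq_ge0 y.
apply: sq_add => //.
- by rewrite divr_ge0.
- by rewrite mulr_ge0.
- have -> : sq (fun a => s a * m) = m ^+ 2 * sq s.
    by rewrite /sq mulr_sumr; apply: eq_bigr => a _; rewrite exprMn mulrC.
  have Hm2 : m ^+ 2 = dot s y ^+ 2 / n%:R ^+ 2 by rewrite /m expr_div_n.
  apply: (@le_trans _ _ (sq s * sq y / n%:R ^+ 2 * sq s)).
    rewrite Hm2; apply: ler_wpM2r => //; apply: ler_wpM2r; last exact: CS.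
    by rewrite invr_ge0 exprn_ge0 ?ler0n.
  by apply: eq_ler; field.
- have Hz : sq zp <= sq z.
    have -> : sq zp = sq z - n%:R * m ^+ 2.
      rewrite /sq /zp (eq_bigr (fun b => z b ^+ 2 - (2 * m) * z b + m ^+ 2)).
        by rewrite big_split /= sumrB -mulr_sumr Hsz sumr_const card_ord mulr_natl; ring.
      by move=> b _; ring.
    by rewrite lerBlDr lerDl mulr_ge0 ?ler0n ?sqr_ge0.
  have Hz2 : sq z <= K * sq y.
    rewrite /sq mulr_sumr; apply: ler_sum => b _; rewrite /z exprMn.
    by apply: ler_wpM2r; rewrite ?sqr_ge0.
  have Hv : sq (fun a => s a * Pf A d zp a) <= K * sq (Pf A d zp).
    rewrite /sq mulr_sumr; apply: ler_sum => b _; rewrite exprMn.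
    by apply: ler_wpM2r; rewrite ?sqr_ge0.
  apply: (le_trans Hv).
  have := Hspec zp Hzp => Hsp.
  have Hsq0 := sq_ge0 (Pf A d zp).
  have Hzp0 := sq_ge0 zp.
  have Hl2 : 0 <= lam ^+ 2 by rewrite sqr_ge0.
  apply: (le_trans (ler_wpM2l HK Hsp)).
  apply: (@le_trans _ _ (K * (lam ^+ 2 * (K * sq y)))).
    apply: ler_wpM2l => //; apply: ler_wpM2l => //; exact: le_trans Hz Hz2.
  rewrite exprMn; apply: eq_ler; ring.
Qed.

Import Order.TTheory GRing.Theory Num.Theory.
Local Open Scope ring_scope.
Set Implicit Arguments. Unset Strict Implicit.

Definition Mit (R : realType) n (A : 'M[nat]_n) d (s : 'I_n -> R) k := iter k (Mop A d s) s.

Lemma vn_const (R : realType) n (A : 'M[nat]_n) d (s g : 'I_n -> R) k a :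
  (forall a, g a = s a ^+ 2) ->
  vn A d k (fun _ => g) a = s a * Mit A d s k a.
Proof.
move=> Hg; elim: k a => [|k IH] a /=; first by rewrite Hg mulr1 expr2.
rewrite /Mop /Pf Hg expr2 -mulrA; congr (_ * (_ * _)).
by apply: eq_bigr => b _; rewrite IH.
Qed.

Lemma Mit_bound (R : realType) n (A : 'M[nat]_n) d (s : 'I_n -> R) rho k :
  (forall y, sq (Mop A d s y) <= rho ^+ 2 * sq y) ->
  sq (Mit A d s k) <= (rho ^+ k) ^+ 2 * sq s.
Proof.
move=> H; elim: k => [|k IH]; first by rewrite expr0 expr1n mul1r.
rewrite /Mit iterS -/(Mit A d s k); apply: (le_trans (H _)).
have -> : (rho ^+ k.+1) ^+ 2 * sq s = rho ^+ 2 * ((rho ^+ k) ^+ 2 * sq s).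
  by rewrite [rho ^+ k.+1]exprS; ring.
apply: ler_wpM2l; first by rewrite sqr_ge0.
exact: IH.
Qed.

Lemma chern_sum (R : realType) n (A : 'M[nat]_n) d (s g : 'I_n -> R) rho k :
  (forall a, g a = s a ^+ 2) -> 0 <= rho ->
  ((0 < k)%N -> forall y, sq (Mop A d s y) <= rho ^+ 2 * sq y) ->
  \sum_a vn A d k (fun _ => g) a <= sq s * rho ^+ k.
Proof.
move=> Hg Hr H.
have -> : \sum_a vn A d k (fun _ => g) a = dot s (Mit A d s k).
  by apply: eq_bigr => a _; rewrite (vn_const _ _ _ _ Hg).
case: k H => [|k] H.
  by rewrite expr0 mulr1 /dot /sq; apply: eq_ler; apply: eq_bigr => a _; rewrite expr2.
apply: le_of_sqr; first by rewrite mulr_ge0 ?sq_ge0 ?exprn_ge0.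
apply: (le_trans (CS _ _)).
have Hb := Mit_bound k.+1 (H isT).
apply: (le_trans (ler_wpM2l (sq_ge0 s) Hb)).
by apply: eq_ler; rewrite exprMn; ring.
Qed.

Import Order.TTheory GRing.Theory Num.Theory.
Local Open Scope ring_scope.
Set Implicit Arguments. Unset Strict Implicit.

Lemma char_poly_sim (F : fieldType) n (U B : 'M[F]_n) :
  U \in unitmx -> char_poly (invmx U *m B *m U) = char_poly B.
Proof.
move=> HU; rewrite /char_poly.
set P := map_mx (@polyC F) U; set Pi := map_mx (@polyC F) (invmx U).
have HPi : Pi *m P = 1%:M by rewrite /Pi /P -map_mxM mulVmx // map_mx1.
have -> : char_poly_mx (invmx U *m B *m U) = Pi *m char_poly_mx B *m P.
  rewrite /char_poly_mx !map_mxM -/P -/Pi mulmxBr mulmxBl.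
  by rewrite mul_mx_scalar -scalemxAl HPi scalemx1.
have H1 : \det Pi * \det P = 1 by rewrite -det_mulmx HPi det1.
rewrite !det_mulmx -[RHS]mul1r -H1; ring.
Qed.

Lemma sort_count (R : realType) (s : seq R) c :
  (1 < size s)%N ->
  nth 0 (sort (fun x y : R => y <= x) [seq `|mu| | mu <- s]) 1 <= c ->
  (count (fun mu : R => (c < `|mu|)%R) s <= 1)%N.
Proof.
move=> Hs Hnth.
set L := sort (fun x y : R => y <= x) [seq `|mu| | mu <- s] in Hnth *.
have -> : count (fun mu => c < `|mu|) s = count (fun a => c < a) L.
  have Hp : perm_eq L [seq `|mu| | mu <- s] by rewrite /L perm_sort.
  by rewrite (permP Hp) count_map.
have HL : sorted (fun x y : R => y <= x) L.
  by apply: sort_sorted => x y; rewrite le_total.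
have Hsz : size L = size s by rewrite /L size_sort size_map.
move: HL Hnth Hsz.
case: L => [|a [|b rest]] /=; [by move=> _ _ Hz; move: Hs; rewrite -Hz
  | by move=> _ _ Hz; move: Hs; rewrite -Hz | ].
move=> /andP [_ Hp] Hb _.
have Hall : all (fun x => x <= b) rest.
  have := order_path_min (leT := fun x y : R => y <= x) (x := b) (s := rest).
  move=> H; apply: H => //; move=> x y z Hyx Hzy; exact: le_trans Hzy Hyx.
have -> : count (fun a => c < a) rest = 0%N.
  apply/eqP; rewrite -leqn0 leqNgt -has_count; apply/hasPn => x Hx.
  by rewrite -leNgt; apply: le_trans Hb; move/allP: Hall => /(_ x Hx).
by rewrite addn0 [(c < b)%R]ltNge Hb /= addn0 leq_b1.
Qed.

Lemma sort_nth_ge0 (R : realType) (s : seq R) :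
  (1 < size s)%N ->
  0 <= nth 0 (sort (fun x y : R => y <= x) [seq `|mu| | mu <- s]) 1.
Proof.
move=> Hs; set L := sort (fun x y : R => y <= x) [seq `|mu| | mu <- s].
have Hsz : size L = size s by rewrite /L size_sort size_map.
have : nth 0 L 1 \in L by apply: mem_nth; rewrite Hsz.
rewrite /L mem_sort => /mapP [mu _ ->]; exact: normr_ge0.
Qed.

Import Order.TTheory GRing.Theory Num.Theory.
Local Open Scope ring_scope.
Set Implicit Arguments. Unset Strict Implicit.

Lemma e_lb (R : realType) : (256 / 100 : R) <= expR 1.
Proof.
have H : (9 / 8 : R) <= expR (1 / 8).
  by apply: le_trans (expR_ge1Dx _); lra.
have -> : (1 : R) = 8%:R * (1 / 8) by field.
rewrite expRM_natl.
apply: (@le_trans _ _ ((9/8) ^+ 8)); first by rewrite !exprS expr0; lra.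
by apply: lerXn2r; rewrite ?nnegrE ?expR_ge0 //; lra.
Qed.

Lemma e_ub (R : realType) : expR (1 : R) <= 4.
Proof.
have H : (1 / 2 : R) <= expR (- (1 / 2)).
  by apply: le_trans (expR_ge1Dx _); lra.
have Hp := expR_gt0 (1 / 2 : R).
have H2 : expR (1 / 2 : R) <= 2.
  rewrite expRN in H.
  have Hy : (expR (1 / 2 : R))^-1 * expR (1 / 2) = 1 by rewrite mulVf // gt_eqF.
  have := ler_wpM2r (ltW Hp) H; rewrite Hy; lra.
have -> : (1 : R) = 2%:R * (1 / 2) by field.
rewrite expRM_natl expr2.
have := expR_ge0 (1/2 : R); nra.
Qed.

Lemma ln_ge2 (R : realType) (x : R) : 20 <= x -> 2 <= ln x.
Proof.
move=> Hx.
have He : expR 2 <= x.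
  have -> : (2 : R) = 2%:R * 1 by rewrite mulr1.
  rewrite expRM_natl expr2; have := e_ub R; have := expR_ge0 (1 : R); nra.
rewrite -[X in X <= _](expRK (2 : R)).
rewrite ler_ln ?posrE ?expR_gt0 //; lra.
Qed.

Lemma tail8 (R : realType) (x : R) : 20 <= x -> expR (- (x * ln x ^+ 3)) <= expR (- (8 * x)).
Proof.
move=> Hx; rewrite ler_expR lerN2.
have H2 := ln_ge2 Hx.
have H8 : 8 <= ln x ^+ 3.
  apply: (@le_trans _ _ (2 ^+ 3)); first by rewrite !exprS expr0; lra.
  by apply: lerXn2r; rewrite ?nnegrE //; lra.
rewrite mulrC; apply: ler_wpM2l; lra.
Qed.

Lemma constC_ge (R : realType) : 23 <= constC R.
Proof.
rewrite /constC.
have He := e_lb R.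
have -> : (2 : R) = 2%:R * 1 by rewrite mulr1.
have -> : (3 : R) = 3%:R * 1 by rewrite mulr1.
rewrite !expRM_natl !exprS expr0 !mulr1.
set e := expR 1 in He *.
have H0 : (0 : R) <= 256 / 100 by lra.
have H1' := ler_pM H0 H0 He He.
have H1 : 6 <= e * e by apply: le_trans H1'; lra.
have H0' : (0 : R) <= 256 / 100 * (256 / 100) by lra.
have H2' := ler_pM H0 H0' He H1'.
have H2 : 16 <= e * (e * e) by apply: le_trans H2'; lra.
set a := e * e in H1 *; set b := e * (e * e) in H2 *.
lra.
Qed.

Lemma nat_le_exp (R : realType) (x : R) : x <= expR x.
Proof. by apply: le_trans (expR_ge1Dx x); lra. Qed.

Import Order.TTheory GRing.Theory Num.Theory.
Local Open Scope ring_scope.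
Set Implicit Arguments. Unset Strict Implicit.

Lemma pointwise (R : realType) (T : nat) (y : R) : 0 <= y ->
  (if y < T%:R then expR y else 1) <=
  expR 20 + \sum_(k < T | (20 <= k)%N) expR (k.+1%:R) * (if k%:R <= y then 1 else 0).
Proof.
move=> Hy.
have HS : 0 <= \sum_(k < T | (20 <= k)%N) expR (k.+1%:R) * (if k%:R <= y then 1 else 0 : R).
  by apply: sumr_ge0 => k _; apply: mulr_ge0; rewrite ?expR_ge0 //; case: ifP.
have He20 : 1 <= expR (20 : R) by apply: le_trans (expR_ge1Dx _); lra.
case: ifP => HyT; last by apply: le_trans He20 _; rewrite lerDl.
have [Hy20|Hy20] := ltP y 20.
  apply: le_trans (_ : expR 20 <= _); last by rewrite lerDl.
  by rewrite ler_expR ltW.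
have /andP [Hk1 Hk2] := truncn_itv Hy.
set k := Num.trunc y in Hk1 Hk2.
have Hk20 : (20 <= k)%N.
  rewrite leqNgt; apply/negP => Hlt.
  have : y < 20.
    apply: lt_le_trans Hk2 _. by rewrite (_ : (20 : R) = 20%:R) // ler_nat.
  by rewrite ltNge Hy20.
have HkT : (k < T)%N by rewrite -(ltr_nat R); apply: le_lt_trans Hk1 HyT.
apply: le_trans (_ : \sum_(k < T | (20 <= k)%N) expR (k.+1%:R) * (if k%:R <= y then 1 else 0) <= _); last by rewrite lerDr; lra.
rewrite (bigD1 (Ordinal HkT)) //= Hk1 mulr1.
apply: le_trans (_ : expR k.+1%:R <= _).
  by rewrite ler_expR ltW.
by rewrite lerDl; apply: sumr_ge0 => j _; apply: mulr_ge0; rewrite ?expR_ge0 //; case: ifP.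
Qed.

Lemma shell_sum (R : realType) (T : nat) (p : nat -> R) :
  (forall k, (20 <= k)%N -> p k <= expR (- (8 * k%:R))) ->
  \sum_(k < T | (20 <= k)%N) expR (k.+1%:R) * p k <= 1.
Proof.
move=> Hp.
pose u := fun k : nat => expR (- (k%:R : R)).
have Hem1 : expR (-1 : R) <= 1 / 2.
  rewrite expRN; have He := e_lb R; have Hp1 : 0 < expR (1 : R) by apply: expR_gt0.
  rewrite -div1r ler_pdivrMr //; lra.
have Hterm : forall k, (20 <= k)%N -> expR (k.+1%:R) * p k <= u k - u k.+1.
  move=> k Hk.
  have Hk' : (20 : R) <= k%:R by rewrite ler_nat.
  apply: le_trans (_ : expR (k.+1%:R) * expR (- (8 * k%:R)) <= _).
    by apply: ler_wpM2l; rewrite ?expR_ge0 ?Hp.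
  have -> : expR (k.+1%:R : R) * expR (- (8 * k%:R)) = expR (- k%:R) * expR (1 - 6 * k%:R).
    by rewrite -!expRD; congr expR; rewrite -addn1 natrD; ring.
  have -> : u k - u k.+1 = expR (- k%:R) * (1 - expR (-1)).
    by rewrite /u mulrBr mulr1 -expRD; congr (_ - expR _); rewrite -addn1 natrD; ring.
  apply: ler_wpM2l; first exact: expR_ge0.
  apply: (@le_trans _ _ (expR (-1))).
    by rewrite ler_expR; lra.
  lra.
apply: (@le_trans _ _ (\sum_(k < T) (u k - u k.+1))).

  rewrite big_mkcond /=; apply: ler_sum => k _.
  case: ifP => Hk; first exact: Hterm.
  by rewrite subr_ge0 /u ler_expR lerN2 ler_nat.
rewrite -(big_mkord xpredT (fun k => u k - u k.+1)).
have := telescope_sumr u (leq0n T).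
rewrite (eq_bigr (fun k => - (u k - u k.+1))) => [|k _]; last by rewrite opprB.
rewrite sumrN => /eqP; rewrite eqr_oppLR => /eqP ->.
by rewrite opprB /u mulr0n oppr0 expR0 lerBlDr lerDl expR_ge0.
Qed.

Lemma sum_ind (R : realType) n (P : pred 'I_n) :
  \sum_a (if P a then 1 else 0 : R) = #|[set a | P a]|%:R.
Proof.
rewrite -big_mkcond /= (eq_bigl (fun a => a \in [set a | P a])) => [|a]; last by rewrite inE.
by rewrite sumr_const.
Qed.

Lemma Eg_bound (R : realType) n (f : 'I_n -> R) (T : nat) :
  (0 < n)%N -> (forall v, 0 <= f v) ->
  (forall x : R, 20 <= x -> prU R (fun v => x <= f v) <= expR (- (x * ln x ^+ 3))) ->
  n%:R^-1 * \sum_a (if f a < T%:R then expR (f a) else 1) <= expR 20 + 1.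
Proof.
move=> Hn Hf Htail.
have Hn0 : n%:R != 0 :> R by rewrite pnatr_eq0 -lt0n.
have Hni : 0 <= n%:R^-1 :> R by rewrite invr_ge0 ler0n.
apply: (@le_trans _ _ (n%:R^-1 * \sum_a (expR 20 + \sum_(k < T | (20 <= k)%N)
           expR (k.+1%:R) * (if k%:R <= f a then 1 else 0)))).
  by apply: ler_wpM2l => //; apply: ler_sum => a _; apply: pointwise.
rewrite big_split /= sumr_const card_ord mulrDr.
have -> : n%:R^-1 * (expR 20 *+ n) = expR 20 :> R.
  by rewrite -[expR 20 *+ n]mulr_natr mulrCA mulVf ?mulr1.

apply: lerD => //.
rewrite exchange_big /= mulr_sumr.
apply: (@le_trans _ _ (\sum_(k < T | (20 <= k)%N) expR (k.+1%:R) * prU R (fun v => k%:R <= f v))).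
  apply: eq_ler; apply: eq_bigr => k _.
  rewrite -mulr_sumr mulrCA; congr (_ * _).
  by rewrite (@sum_ind R n (fun a => k%:R <= f a)) /prU mulrC.
apply: (@shell_sum R T (fun k : nat => prU R (fun v => k%:R <= f v))) => k Hk.
have Hk' : (20 : R) <= k%:R by rewrite ler_nat.
by apply: le_trans (Htail _ Hk') _; apply: tail8.
Qed.

Import Order.TTheory GRing.Theory Num.Theory.
Local Open Scope ring_scope.
Set Implicit Arguments. Unset Strict Implicit.

Lemma wp_ge0 (R : realType) n (A : 'M[nat]_n) d l (w : {ffun 'I_l -> 'I_n}) :
  0 <= walk_prob R A d w.
Proof.
rewrite /walk_prob; apply: mulr_ge0; first by rewrite invr_ge0 ler0n.
apply: prodr_ge0 => i _; apply: prodr_ge0 => j _.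
by apply: divr_ge0; rewrite ler0n.
Qed.

Lemma marg_walk (R : realType) n (A : 'M[nat]_n) d l' (i : 'I_l'.+1) (P : pred 'I_n) :
  regular A d ->
  \sum_(w : {ffun 'I_l'.+1 -> 'I_n}) walk_prob R A d w * (if P (w i) then 1 else 0)
  = prU R P.
Proof.
move=> Hreg.
pose h := fun (j : nat) (x : 'I_n) => if j == val i then (if P x then 1 else 0) else (1 : R).
have E : forall w : {ffun 'I_l'.+1 -> 'I_n},
    walk_prob R A d w * (if P (w i) then 1 else 0)
    = n%:R^-1 * (Wt R A d w * \prod_(j < l'.+1) h j (w j)).
  move=> w; rewrite /walk_prob -/(Wt R A d w) -mulrA; congr (_ * (_ * _)).
  rewrite (bigD1 i) //= big1 ?mulr1 => [|j Hj]; first by rewrite /h eqxx.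
  by rewrite /h val_eqE (negbTE Hj).
under eq_bigr do rewrite E.
have Hi : (val i <= l')%N by rewrite -ltnS (ltn_ord i).
have Hh : forall j x, j != val i -> h j x = 1 by move=> j x Hj; rewrite /h (negbTE Hj).
rewrite -mulr_sumr walk_sum (vn_marg Hreg Hi Hh).
rewrite /h eqxx (@sum_ind R n P) /prU mulrC //.
Qed.

Lemma term2_eq (R : realType) n (A : 'M[nat]_n) d l' (g : 'I_n -> R) :
  \sum_(w : {ffun 'I_l'.+1 -> 'I_n}) walk_prob R A d w * \prod_(i < l'.+1) g (w i)
  = n%:R^-1 * \sum_a vn A d l' (fun _ => g) a.
Proof.
rewrite -(walk_sum A d l' (fun _ => g)) mulr_sumr; apply: eq_bigr => w _.
by rewrite /walk_prob -mulrA.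
Qed.

Import Order.TTheory GRing.Theory Num.Theory.
Local Open Scope ring_scope.
Local Open Scope sesquilinear_scope.
Set Implicit Arguments. Unset Strict Implicit.

Lemma nrm_mx (C : numClosedFieldType) n (w : 'rV[C]_n) :
  \sum_j `|w 0 j| ^+ 2 = (w *m w ^t*) 0 0.
Proof.
rewrite !mxE; apply: eq_bigr => j _; by rewrite !mxE normCK.
Qed.

Lemma specC (C : numClosedFieldType) n (M : 'M[C]_n) (dd t : C) (x : 'rV[C]_n) :
  M \is normalmx ->
  (forall i j, t < `|spectral_diag M 0 i| -> t < `|spectral_diag M 0 j| -> i = j) ->
  0 <= t -> t < dd ->
  (const_mx 1 : 'rV[C]_n) *m M = dd *: const_mx 1 ->
  \sum_j x 0 j = 0 ->
  \sum_j `|(x *m M) 0 j| ^+ 2 <= t ^+ 2 * \sum_j `|x 0 j| ^+ 2.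
Proof.
move=> Hnorm Huniq Ht Htd He Hx.
set U := spectralmx M; set D := spectral_diag M.
have HM : M = invmx U *m diag_mx D *m U by apply/orthomx_spectralP.
have Uu : U \is unitarymx := spectral_unitarymx M.
have Uinv : invmx U = U ^t* by apply: invmx_unitary.
have UU' : U *m U ^t* = 1%:M by apply/unitarymxP.
have U'U : U ^t* *m U = 1%:M by rewrite -Uinv mulVmx ?unitarymx_unit.
have pres : forall w : 'rV_n, \sum_j `|(w *m U) 0 j| ^+ 2 = \sum_j `|w 0 j| ^+ 2.
  move=> w; rewrite !nrm_mx trmx_mul map_mxM mulmxA -(mulmxA w U) UU' mulmx1 //.
set Y := x *m U ^t*.
have xE : x = Y *m U by rewrite /Y -mulmxA U'U mulmx1.
have xM : x *m M = (Y *m diag_mx D) *m U by rewrite HM Uinv !mulmxA.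
rewrite xM pres [in X in _ <= _ * X]xE pres mulr_sumr.
apply: ler_sum => j _; rewrite mul_mx_diag mxE normrM exprMn.
set Z := (const_mx 1 : 'rV[C]_n) *m U ^t*.
have HZ : Z *m diag_mx D = dd *: Z.
  have := congr1 (fun N : 'rV[C]_n => N *m U ^t*) He; rewrite /= HM Uinv !mulmxA.
  rewrite -(mulmxA _ U) UU' mulmx1 => ->; by rewrite scalemxAl.
have HZk : forall k, Z 0 k * D 0 k = dd * Z 0 k.
  move=> k; have := congr1 (fun N : 'rV[C]_n => N 0 k) HZ.
  by rewrite /= mul_mx_diag [X in X = _ -> _]mxE [X in _ = X -> _]mxE.
have Horth : \sum_k Y 0 k * (Z 0 k)^* = 0.
  have : (Y *m Z ^t*) 0 0 = 0.
    rewrite /Y /Z trmx_mul map_mxM trmxCK mulmxA -(mulmxA x) U'U mulmx1.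
    rewrite mxE; apply: etrans Hx; apply: eq_bigr => k _; by rewrite !mxE rmorph1 mulr1.
  move=> H; apply: etrans H; rewrite mxE; apply: eq_bigr => k _; by rewrite !mxE.
have Hdd0 : 0 < dd by apply: le_lt_trans Htd.
have Hbad : forall k, Z 0 k != 0 -> t < `|D 0 k|.
  move=> k Hk; have : D 0 k = dd.
    by apply: (mulfI Hk); rewrite HZk mulrC.
  by move=> ->; rewrite gtr0_norm.
have HYD : 0 <= `|Y 0 j| ^+ 2 by rewrite exprn_ge0.
have [Hle|Hlt] := boolP (`|D 0 j| <= t).
  rewrite mulrC; apply: ler_wpM2r => //.
  by rewrite lerXn2r ?nnegrE ?normr_ge0.
have Htj : t < `|D 0 j|.
  rewrite real_ltNge ?Hlt // ?realE ?normr_ge0 ?Ht //.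
suff -> : Y 0 j = 0 by rewrite normr0 expr0n /= !mul0r mulr0.
case: (pickP (fun k => Z 0 k != 0)) => [k Hk | H0]; last first.
  exfalso.
  have HZ0 : Z = 0.
    by apply/rowP => k; rewrite [RHS]mxE; move: (H0 k) => /= /negbFE/eqP.
  have : (const_mx 1 : 'rV[C]_n) = Z *m U by rewrite /Z -mulmxA U'U mulmx1.
  rewrite HZ0 mul0mx => /rowP/(_ j); rewrite !mxE => /eqP; by rewrite oner_eq0.
have Hkj : k = j by apply: Huniq => //; apply: Hbad.
have Hzero : forall k', k' != j -> Z 0 k' = 0.
  move=> k' Hk'; apply/eqP; apply: contraR Hk' => Hz.
  by apply/eqP; apply: Huniq => //; apply: Hbad.
move: Horth; rewrite (bigD1 j) //= big1 ?addr0 => [|k' Hk']; last first.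
  by rewrite Hzero // conjC0 mulr0.
move=> /eqP; rewrite mulf_eq0 conjC_eq0 -Hkj (negbTE Hk) orbF => /eqP //.
Qed.

Import Order.TTheory GRing.Theory Num.Theory.
Local Open Scope ring_scope.
Set Implicit Arguments. Unset Strict Implicit.

Lemma normRC (R : realType) (r : R) : `|real_complex R r| = real_complex R `|r|.
Proof. by rewrite normc_def /= expr0n /= addr0 sqrtr_sqr. Qed.

Lemma spec_R (R : realType) n (A : 'M[nat]_n) d lam :
  expander A d lam -> lam < 1 -> (1 < n)%N ->
  forall z : 'I_n -> R, \sum_a z a = 0 -> sq (Pf A d z) <= lam ^+ 2 * sq z.
Proof.
move=> [Hreg [s [Hcp Hsort]]] Hl1 Hn z Hz.
have Hd : (0 < d)%N by case: Hreg.
have HAs : forall i j, A i j = A j i.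
  move=> i j; case: Hreg => _ [Hs _].
  by have := congr1 (fun M : 'M[nat]_n => M i j) Hs; rewrite /= mxE.
have Hsz : size s = n.
  have := congr1 (fun p : {poly R} => size p) Hcp; rewrite /= size_char_poly size_prod_XsubC.
  by move=> [].
have Hs2 : (1 < size s)%N by rewrite Hsz.
have Hsort' := Hsort Hs2.
pose AC : 'M[R[i]]_n := map_mx (fun k : nat => k%:R) A.
have HACt : (AC ^t*)%sesqui = AC.
  apply/matrixP => i j; rewrite !mxE HAs; exact: conjC_nat.
have Hnorm : AC \is normalmx by apply/normalmxP; rewrite HACt.
have HcpAC : char_poly AC = \prod_(mu <- s) ('X - ((real_complex R) mu)%:P).
  have -> : AC = map_mx (real_complex R) (adjR R A).
    by apply/matrixP => i j; rewrite !mxE rmorph_nat.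
  rewrite -map_char_poly Hcp rmorph_prod; apply: eq_bigr => mu _.
  exact: map_polyXsubC.
pose D := spectral_diag AC.
have HM : AC = invmx (spectralmx AC) *m diag_mx D *m spectralmx AC.
  by apply/orthomx_spectralP.
have HcpD : char_poly AC = \prod_(i < n) ('X - (D 0 i)%:P).
  rewrite {1}HM char_poly_sim ?spectral_unit // char_poly_trig ?diag_mx_is_trig //.
  by apply: eq_bigr => i _; rewrite mxE eqxx mulr1n.
have Hperm : perm_eq [seq D 0 i | i <- index_enum 'I_n] [seq (real_complex R) mu | mu <- s].
  by apply: prod_XsubC_eq; rewrite !big_map -HcpAC HcpD.
have Hdl : 0 <= d%:R * lam.
  by apply: le_trans Hsort'; apply: sort_nth_ge0.
have Hdpos : 0 < d%:R :> R by rewrite ltr0n.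
have Hlam0 : 0 <= lam by rewrite -(pmulr_rge0 _ Hdpos).
pose t := (real_complex R) (d%:R * lam).
have Huniq : forall i j, t < `|D 0 i| -> t < `|D 0 j| -> i = j.
  move=> i j Hi Hj; apply/eqP; apply: contraT => Hij.
  have Hc := sort_count Hs2 Hsort'.
  have E1 : count (fun c => t < `|c|) [seq (real_complex R) mu | mu <- s]
          = count (fun mu : R => (d%:R * lam < `|mu|)%R) s.
    by rewrite count_map; apply: eq_count => mu /=; rewrite normRC ltcR.
  have E2 : count (fun c => t < `|c|) [seq D 0 i | i <- index_enum 'I_n] = 
            (\sum_(k < n | (t < `|D 0 k|)%R) 1)%N.
    by rewrite count_map -sum1_count.
  have H2 : (2 <= \sum_(k < n | (t < `|D 0 k|)%R) 1)%N.
    rewrite (bigD1 i) //= (bigD1 j) /=; last by rewrite Hj eq_sym Hij.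
    by rewrite add1n ltnS addSn ltnS leq0n.
  move: Hc; rewrite -E1 -(permP Hperm) E2 => H1.
  by have := leq_trans H2 H1.
pose x : 'rV[R[i]]_n := \row_j (real_complex R) (z j).
have He : (const_mx 1 : 'rV[R[i]]_n) *m AC = (real_complex R) d%:R *: const_mx 1.
  apply/rowP => j; rewrite !mxE rmorph_nat mulr1.
  under eq_bigr do rewrite !mxE mul1r HAs.
  case: Hreg => _ [_ Hr]; by rewrite -natr_sum Hr.
have Ht0 : 0 <= t by rewrite /t ler0c.
have Htd : t < (real_complex R) d%:R by rewrite /t ltcR gtr_pMr.
have Hx : \sum_j x 0 j = 0.
  under eq_bigr do rewrite mxE.
  by rewrite -rmorph_sum Hz rmorph0.
have H := specC Hnorm Huniq Ht0 Htd He Hx.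
have Hxj : forall j, (x *m AC) 0 j = (real_complex R) (d%:R * Pf A d z j).
  move=> j; rewrite mxE /Pf mulr_sumr rmorph_sum; apply: eq_bigr => i _.
  rewrite !mxE /qq.
  have Hd0 : d%:R != 0 :> R by rewrite gt_eqF.
  have -> : d%:R * ((A j i)%:R / d%:R * z i) = z i * (A i j)%:R :> R.
    by rewrite HAs; field.
  by rewrite rmorphM rmorph_nat.
move: H.
under eq_bigr do rewrite Hxj normRC -rmorphXn real_normK ?num_real //.
under [X in _ <= _ * X]eq_bigr do rewrite mxE normRC -rmorphXn real_normK ?num_real //.
rewrite -!rmorph_sum /t -rmorphXn -rmorphM lecR.
have -> : \sum_j (d%:R * Pf A d z j) ^+ 2 = d%:R ^+ 2 * sq (Pf A d z).
  by rewrite /sq mulr_sumr; apply: eq_bigr => j _; rewrite exprMn.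
rewrite exprMn => H.
by rewrite -(ler_pM2l (exprn_gt0 2 Hdpos)) mulrA.
Qed.

Lemma lam_ge0 (R : realType) n (A : 'M[nat]_n) d (lam : R) :
  expander A d lam -> (1 < n)%N -> 0 <= lam.
Proof.
move=> [Hreg [s [Hcp Hsort]]] Hn.
have Hd : (0 < d)%N by case: Hreg.
have Hsz : size s = n.
  have := congr1 (fun p : {poly R} => size p) Hcp; rewrite /= size_char_poly size_prod_XsubC.
  by move=> [].
have Hs2 : (1 < size s)%N by rewrite Hsz.
have Hdl : 0 <= d%:R * lam by apply: le_trans (Hsort Hs2); apply: sort_nth_ge0.
have Hdpos : 0 < d%:R :> R by rewrite ltr0n.
by rewrite -(pmulr_rge0 _ Hdpos).
Qed.

Unset Implicit Arguments.
Set Strict Implicit.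
Import Order.TTheory GRing.Theory Num.Theory.
Local Open Scope ring_scope.

Theorem lemma5 (R : realType) (n : nat) (A : 'M[nat]_n) (d : nat) (lam : R)
  (l : nat) (f : 'I_n -> R) :
  expander A d lam ->
  (1 <= l)%N ->
  (forall v, 0 <= f v) ->
  (forall x : R, 20 <= x ->
     prU R (fun v => x <= f v) <= expR (- (x * ln x ^+ 3))) ->
  lam <= expR (- (l%:R * ln (l%:R : R) ^+ 3)) ->
  prWalk R A d l (fun w => constC R * l%:R <= \sum_(i < l) f (w i))
    <= expR (- (l%:R : R)).
Proof.
move=> Hexp Hl Hf Htail Hlam.
have Hreg : regular A d by case: Hexp.
case: l Hl Hlam => [//|l'] _ Hlam.
have [Hn0|Hn] := posnP n.
  subst n; rewrite /prWalk big1 ?expR_ge0 // => w _.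
  by case: (w ord0).
pose l := l'.+1.
pose T := maxn l 20.
pose TR := (T%:R : R).
have HT20 : (20 : R) <= TR by rewrite ler_nat leq_maxr.
have HTl : (l%:R : R) <= TR by rewrite ler_nat leq_maxl.
pose g := fun a => if f a < TR then expR (f a) else 1.
pose s := fun a => if f a < TR then expR (f a / 2) else 1.
have Hgs : forall a, g a = s a ^+ 2.
  move=> a; rewrite /g /s; case: ifP => _; last by rewrite expr1n.
  by rewrite expr2 -expRD; congr expR; field.
pose K := expR TR.
have HK0 : 0 <= K by apply: expR_ge0.
have HsK : forall a, s a ^+ 2 <= K.
  move=> a; rewrite -Hgs /g /K; case: ifP => H.
    by rewrite ler_expR ltW.
  by apply: le_trans (expR_ge1Dx _) ; rewrite lerDl; lra.
pose lam' := Num.max lam 0.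
have Hl0 : 0 <= lam' by rewrite le_max lexx orbT.
have Hl1 : lam' <= expR (- (l%:R * ln (l%:R : R) ^+ 3)).
  by rewrite ge_max Hlam expR_ge0.
have Hspec : (0 < l')%N -> forall z : 'I_n -> R, \sum_a z a = 0 ->
    sq (Pf A d z) <= lam' ^+ 2 * sq z.
  move=> Hl' z Hz.
  have [Hn1|Hn2] := leqP n 1.
    have Hz0 : forall a, z a = 0.
      move=> a; move: Hz; have Hn1' : n = 1%N by apply/eqP; rewrite eqn_leq Hn1 Hn.
      subst n; rewrite big_ord1; by rewrite (ord1 a).
    have -> : sq (Pf A d z) = 0.
      rewrite /sq big1 // => a _; rewrite /Pf big1 ?expr0n // => b _.
      by rewrite Hz0 mulr0.
    by rewrite mulr_ge0 ?sqr_ge0 ?sq_ge0.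
  have Hlam0 := lam_ge0 Hexp Hn2.
  have -> : lam' = lam by rewrite /lam' max_l.
  apply: (spec_R Hexp) => //.
  apply: le_lt_trans Hlam _; rewrite expR_lt1 oppr_lt0.
  apply: mulr_gt0; first by rewrite ltr0n.
  apply: exprn_gt0; rewrite -ln1 ltr_ln ?posrE ?ltr0n // ?ltr1n //.
pose rho := sq s / n%:R + lam' * K.
have Hsq0 : 0 <= sq s by apply: sq_ge0.
have Hrho0 : 0 <= rho.
  by rewrite /rho addr_ge0 ?mulr_ge0 ?divr_ge0 ?ler0n.
have HMb : (0 < l')%N -> forall y, sq (Mop A d s y) <= rho ^+ 2 * sq y.
  by move=> Hl' y; apply: Mbound => //; apply: Hspec.
have Hchern := chern_sum Hgs Hrho0 HMb.
have Hg0 : forall a, 0 <= g a by move=> a; rewrite /g; case: ifP => _; rewrite ?expR_ge0.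
pose c := expR (- (constC R * l'.+1%:R)).
pose chi := fun (w : {ffun 'I_l'.+1 -> 'I_n}) (i : 'I_l'.+1) =>
   (if TR <= f (w i) then 1 else 0 : R).
have Hev : forall w : {ffun 'I_l'.+1 -> 'I_n},
    constC R * l'.+1%:R <= \sum_(i < l'.+1) f (w i) ->
    1 <= \sum_(i < l'.+1) chi w i + c * \prod_(i < l'.+1) g (w i).
  move=> w HE.
  have Hchi0 : forall i, 0 <= chi w i by move=> i; rewrite /chi; case: ifP.
  have Hc0 : 0 <= c * \prod_(i < l'.+1) g (w i).
    by rewrite mulr_ge0 ?expR_ge0 // prodr_ge0.
  case: (boolP [exists i, TR <= f (w i)]) => [/existsP [i Hi] | Hno].
    rewrite (bigD1 i) //= /chi Hi -addrA lerDl addr_ge0 //.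
    by apply: sumr_ge0 => j _; case: ifP.
  have Hlt : forall i, f (w i) < TR.
    move=> i; move: Hno; rewrite negb_exists => /forallP /(_ i).
    by rewrite -real_ltNge ?num_real.
  rewrite big1 ?add0r => [|i _]; last by rewrite /chi leNgt Hlt.
  have -> : \prod_(i < l'.+1) g (w i) = expR (\sum_(i < l'.+1) f (w i)).
    by rewrite expR_sum; apply: eq_bigr => i _; rewrite /g Hlt.
  rewrite /c -expRD; apply: le_trans (expR_ge1Dx _); rewrite lerDl addrC subr_ge0.
  by [].
have Hwalk : prWalk R A d l'.+1
    (fun w : {ffun 'I_l'.+1 -> 'I_n} => constC R * l'.+1%:R <= \sum_(i < l'.+1) f (w i))
  <= \sum_(w : {ffun 'I_l'.+1 -> 'I_n}) walk_prob R A d w *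
       (\sum_(i < l'.+1) chi w i + c * \prod_(i < l'.+1) g (w i)).
  rewrite /prWalk big_mkcond; apply: ler_sum => w _; case: ifP => HE.
    by rewrite -{1}(mulr1 (walk_prob R A d w)); apply: ler_wpM2l; rewrite ?wp_ge0 ?Hev.
  apply: mulr_ge0; first exact: wp_ge0.
  apply: addr_ge0; first by apply: sumr_ge0 => i _; rewrite /chi; case: ifP.
  by rewrite mulr_ge0 ?expR_ge0 // prodr_ge0.
have Hsplit : \sum_(w : {ffun 'I_l'.+1 -> 'I_n}) walk_prob R A d w *
       (\sum_(i < l'.+1) chi w i + c * \prod_(i < l'.+1) g (w i))
   = l'.+1%:R * prU R (fun v => TR <= f v) + c * (n%:R^-1 * \sum_a vn A d l' (fun _ => g) a).
  under eq_bigr do rewrite mulrDr mulr_sumr.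
  rewrite big_split /= exchange_big /=.
  rewrite (eq_bigr (fun _ => prU R (fun v => TR <= f v))) => [|i _]; last first.
    by rewrite -(@marg_walk R n A d l' i (fun v => TR <= f v) Hreg).
  rewrite sumr_const card_ord mulr_natl; congr (_ + _).
  rewrite -term2_eq mulr_sumr; apply: eq_bigr => w _; by rewrite mulrCA.
apply: le_trans Hwalk _; rewrite Hsplit.
pose L := (l'.+1%:R : R).
rewrite -/L.
have HL1 : 1 <= L by rewrite /L ler1n.
have HTL : L <= TR by [].
have HP1 : prU R (fun v => TR <= f v) <= expR (- (8 * L)).
  apply: le_trans (Htail _ HT20) _; apply: le_trans (tail8 HT20) _.
  by rewrite ler_expR lerN2; apply: ler_wpM2l => //; lra.
have HE : sq s / n%:R <= expR 20 + 1.
  have := Eg_bound T Hn Hf Htail.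
  have -> : sq s = \sum_a g a by rewrite /sq; apply: eq_bigr => a _; rewrite Hgs.
  by rewrite mulrC.
have He20 : 21 <= expR (20 : R) by apply: le_trans (expR_ge1Dx _); lra.
have He1 := e_lb R.
have He21 : expR (21 : R) = expR 20 * expR 1 by rewrite -expRD; congr expR; lra.
have HlK : lam' * K <= expR 20.
  case: (leqP l'.+1 20) => Hl20.
    have HT : T = 20%N by rewrite /T /l; apply/maxn_idPr.
    have Hlam1 : lam' <= 1.
      apply: le_trans Hl1 _; rewrite -[X in _ <= X]expR0 ler_expR oppr_le0.
      apply: mulr_ge0; first by rewrite ler0n.
      by apply: exprn_ge0; apply: ln_ge0.
    rewrite /K /TR HT; rewrite -[X in _ <= X]mul1r.
    by apply: ler_wpM2r => //; apply: expR_ge0.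
  have HT : T = l'.+1 by rewrite /T /l; apply/maxn_idPl; apply: ltnW.
  have HL20 : (20 : R) <= L by rewrite /L ler_nat ltnW.
  have Hlam8 : lam' <= expR (- (8 * L)) by apply: le_trans Hl1 (tail8 HL20).
  rewrite /K /TR HT -/L.
  apply: le_trans (_ : expR (- (8 * L)) * expR L <= _).
    by apply: ler_wpM2r => //; apply: expR_ge0.
  rewrite -expRD ler_expR; lra.
have Hrho : rho <= expR 21.
  rewrite /rho He21; nra.
have HE21 : sq s / n%:R <= expR 21 by rewrite He21; nra.
have HT2 : c * (n%:R^-1 * \sum_a vn A d l' (fun _ => g) a) <= expR (- (2 * L)).
  apply: le_trans (_ : c * (expR 21 ^+ l'.+1) <= _).
    apply: ler_wpM2l; first exact: expR_ge0.
    apply: le_trans (_ : n%:R^-1 * (sq s * rho ^+ l') <= _).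
      by apply: ler_wpM2l => //; rewrite invr_ge0 ler0n.
    rewrite mulrA [n%:R^-1 * _]mulrC exprS.
    apply: ler_pM => //; first by rewrite divr_ge0 ?ler0n.
      by rewrite exprn_ge0.
    by apply: lerXn2r; rewrite ?nnegrE ?expR_ge0.
  rewrite /c -expRM_natl -/L -expRD ler_expR.
  have HC := constC_ge R.
  have HCL : 0 <= (constC R - 23) * L by apply: mulr_ge0; lra.
  move: HCL; rewrite mulrBl; set CL := constC R * L; lra.
have HT1 : L * prU R (fun v => TR <= f v) <= expR (- (7 * L)).
  apply: le_trans (_ : expR L * expR (- (8 * L)) <= _).
    apply: ler_pM; [lra | by rewrite /prU divr_ge0 ?ler0n | exact: nat_le_exp | exact: HP1].
  by rewrite -expRD ler_expR; lra.
apply: le_trans (lerD HT1 HT2) _.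
have Hu : expR (- L) <= 1 / 2.
  rewrite expRN -div1r ler_pdivrMr ?expR_gt0 //.
  have := expR_ge1Dx L; lra.
have Hu0 : 0 < expR (- L) by apply: expR_gt0.
have E7 : expR (- (7 * L)) <= expR (- (2 * L)) by rewrite ler_expR; lra.
have E2 : expR (- (2 * L)) = expR (- L) * expR (- L) by rewrite -expRD; congr expR; lra.
rewrite /= in E7 E2 *.
nra.
Qed.
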